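(* Let $X$ be a connected, locally connected, Hausdorff, normal, first countable topological space, $V$ a locally convex topological vector space, and $f:X\to V$ a continuous closed map that has local convexity data and is locally fiber connected. Then (i) the projection $\pi_f:X\to X_f$ is a closed map; (ii) the quotient $X_f$ is a Hausdorff space.
   Context: A subset $C\subset V$ is a cone with vertex $v_0$ if $v_0\in C$ and $(1-\lambda)v_0+\lambda v\in C$ for every $\lambda\ge 0$ and every $v\in C$, $v\ne v_0$; it is a convex cone if it is moreover convex. A continuous map $f:X\to V$ has local convexity data if for each $x\in X$ and every sufficiently small open neighborhood $U_x$ of $x$ there is a convex cone $C_x\subset V$ with vertex $f(x)$, endowed with the subspace topology from $V$, such that (VN) $f(U_x)\subset C_x$ and $f(U_x)$ is a neighborhood of $f(x)$ in $C_x$; and (SLO) $f|_{U_x}:U_x\to C_x$ is an open map, and for every neighborhood $U'_x\subset U_x$ of $x$ the set $f(U'_x)$ is a neighborhood of $f(x)$ in $C_x$. A subset $A\subset X$ satisfies condition (LFC) if for every $a\in A$, the set $A$ does not intersect two different connected components of the fiber $f^{-1}(f(a))$. The map $f$ is locally fiber connected if for every $x\in X$, every open neighborhood of $x$ contains a neighborhood $U_x$ of $x$ satisfying (LFC). Declare $x\sim y$ in $X$ iff $f(x)=f(y)$ and $x,y$ lie in the same connected component of $f^{-1}(f(x))$; $X_f:=X/\!\sim$ with the quotient topology, $\pi_f:X\to X_f$ is the projection and $\tilde f:X_f\to V$ is the unique map with $\tilde f\circ\pi_f=f$. *)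

(* Defs.v *)
From HB Require Import structures.
From mathcomp Require Import all_boot all_order all_algebra generic_quotient.
From mathcomp Require Import all_classical all_reals all_analysis.
Set Implicit Arguments. Unset Strict Implicit. Unset Printing Implicit Defensive.
Import Order.TTheory GRing.Theory Num.Theory.
Local Open Scope classical_set_scope.
Local Open Scope ring_scope.
Local Open Scope quotient_scope.

Definition closed_map (S T : topologicalType) (g : S -> T) : Prop :=
  forall C : set S, closed C -> closed (g @` C).

Definition connected_space (T : topologicalType) : Prop := connected [set: T].

Definition locally_connected_space (T : topologicalType) : Prop :=
  forall (x : T) (N : set T), nbhs x N ->
    exists U : set T, [/\ open U, U x, connected U & U `<=` N].

Definition first_countable_space (T : topologicalType) : Prop :=
  forall x : T, exists B : set_system T,
    [/\ countable B, (forall N, B N -> nbhs x N) &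
        (forall N, nbhs x N -> exists2 M, B M & M `<=` N)].

Definition open_in (T : topologicalType) (C S : set T) : Prop :=
  exists G : set T, open G /\ S = G `&` C.

Definition nbhs_in (T : topologicalType) (C : set T) (p : T) (S : set T) : Prop :=
  exists G : set T, [/\ open G, G p & G `&` C `<=` S].

Definition cone_with_vertex (R : numDomainType) (V : lmodType R)
    (C : set V) (v0 : V) : Prop :=
  C v0 /\ forall (lambda : R) (v : V), 0 <= lambda -> C v -> v <> v0 ->
            C ((1 - lambda) *: v0 + lambda *: v).

Definition convex_cone_with_vertex (R : numDomainType) (V : lmodType R)
    (C : set V) (v0 : V) : Prop :=
  cone_with_vertex C v0 /\ @convex_set R V C.

Definition local_convexity_data (R : numDomainType) (X : topologicalType)
    (V : tvsType R) (f : X -> V) : Prop :=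
  forall x : X, exists2 W : set X, nbhs x W &
    forall U : set X, open U -> U x -> U `<=` W ->
      exists C : set V,
        [/\ convex_cone_with_vertex C (f x),
            f @` U `<=` C, nbhs_in C (f x) (f @` U),
            (* (SLO): f|_U : U -> C is open (U carries the subspace topology) *)
            (forall O : set X, open_in U O -> open_in C (f @` O)) &
            (forall U' : set X, nbhs x U' -> U' `<=` U ->
               nbhs_in C (f x) (f @` U'))].

Definition fiber (X V : Type) (f : X -> V) (x : X) : set X := f @^-1` [set f x].

Definition LFC (X : topologicalType) (V : Type) (f : X -> V) (A : set X) : Prop :=
  forall a : X, A a ->
    forall y z : X, A y -> A z -> fiber f a y -> fiber f a z ->
      connected_component (fiber f a) y = connected_component (fiber f a) z.

Definition locally_fiber_connected (X : topologicalType) (V : Type)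
    (f : X -> V) : Prop :=
  forall (x : X) (O : set X), open O -> O x ->
    exists U : set X, [/\ nbhs x U, U `<=` O & LFC f U].

Definition fib_rel (X : topologicalType) (V : Type) (f : X -> V) (x y : X) : Prop :=
  f x = f y /\ connected_component (fiber f x) x y.

Definition fib_relb (X : topologicalType) (V : Type) (f : X -> V) : rel X :=
  fun x y => `[< fib_rel f x y >].

Lemma fib_relb_refl (X : topologicalType) (V : Type) (f : X -> V) :
  reflexive (fib_relb f).
Proof. by move=> x; apply/asboolP; split => //; exact: connected_component_refl. Qed.

Lemma fib_relb_sym (X : topologicalType) (V : Type) (f : X -> V) :
  symmetric (fib_relb f).
Proof.
suff H : forall x y, fib_relb f x y -> fib_relb f y x.
  by move=> x y; apply/idP/idP; apply: H.
move=> x y /asboolP [fxy cxy]; apply/asboolP; split; first by [].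
have -> : fiber f y = fiber f x by rewrite /fiber fxy.
exact: connected_component_sym.
Qed.

Lemma fib_relb_trans (X : topologicalType) (V : Type) (f : X -> V) :
  transitive (fib_relb f).
Proof.
move=> y x z /asboolP [fxy cxy] /asboolP [fyz cyz]; apply/asboolP.
split; first by rewrite fxy.
have E : fiber f y = fiber f x by rewrite /fiber fxy.
rewrite E in cyz; exact: connected_component_trans cxy cyz.
Qed.

Definition fib_equiv (X : topologicalType) (V : Type) (f : X -> V) : equiv_rel X :=
  EquivRel (fib_relb f) (@fib_relb_refl X V f) (@fib_relb_sym X V f)
    (@fib_relb_trans X V f).

Definition Xf (X : topologicalType) (V : Type) (f : X -> V) : topologicalType :=
  quotient_topology {eq_quot (fib_equiv f)}.

Definition pi_f (X : topologicalType) (V : Type) (f : X -> V) : X -> Xf f :=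
  \pi_(quotient_topology {eq_quot (fib_equiv f)}).

(* Main.v *)
Require Import Defs.
From HB Require Import structures.
From mathcomp Require Import all_boot all_order all_algebra generic_quotient.
From mathcomp Require Import all_classical all_reals all_analysis.
Local Open Scope classical_set_scope.
Local Open Scope ring_scope.
Local Open Scope quotient_scope.
Set Implicit Arguments. Unset Strict Implicit.

Section helpers.
Context (X V : topologicalType) (f : X -> V).

Lemma piP x y : pi_f f x = pi_f f y <-> fib_rel f x y.
Proof.
have := @eqquotP _ (fib_equiv f) {eq_quot (fib_equiv f)} x y.
move=> h; split.
- move=> e; have /h : x = y %[mod {eq_quot (fib_equiv f)}] by exact: e.
  by move/asboolP.
- move=> r; have : fib_equiv f x y by apply/asboolP.
  by move/h.
Qed.

Definition satd (W : set X) := forall y z, W y -> pi_f f y = pi_f f z -> W z.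

Lemma fiber_eq x y : f x = f y -> fiber f x = fiber f y.
Proof. by rewrite /fiber => ->. Qed.

Lemma open_disj_sep {O1 O2 : set X} : open O1 -> open O2 -> O1 `&` O2 = set0 ->
  separated O1 O2.
Proof.
move=> o1 o2 d; split; rewrite -subset0 => p [].
- move=> cp O2p; have := cp O2 (open_nbhs_nbhs (conj o2 O2p)).
  by move=> [z [a b]]; have : (O1 `&` O2) z by []; rewrite d.
- move=> O1p cp; have := cp O1 (open_nbhs_nbhs (conj o1 O1p)).
  by move=> [z [a b]]; have : (O1 `&` O2) z by []; rewrite d.
Qed.

Lemma sat_lemma2 (O1 O2 : set X) (N : set V) : open O1 -> open O2 ->
  O1 `&` O2 = set0 -> f @^-1` N `<=` O1 `|` O2 -> satd (f @^-1` N `&` O1).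
Proof.
move=> o1 o2 d sub y z [Ny O1y] /piP [fyz czy].
split; first by rewrite /= -fyz.
have sc : connected (connected_component (fiber f y) y) by apply: component_connected.
have scsub : connected_component (fiber f y) y `<=` O1 `|` O2.
  move=> w /connected_component_sub fw; apply: sub.
  by rewrite /= fw.
have [h|h] := connected_subset (open_disj_sep o1 o2 d) scsub sc.
- exact: h.
- exfalso; have yy : connected_component (fiber f y) y y
    by apply: connected_component_refl.
  have : (O1 `&` O2) y by split => //; exact: h.
  by rewrite d.
Qed.

Lemma fclosed_nbhs (O : set X) x : closed_map f -> open O -> fiber f x `<=` O ->
  exists N : set V, [/\ open N, N (f x) & f @^-1` N `<=` O].
Proof.
move=> cf oO sub; exists (~` (f @` ~` O)); split.
- by apply: closed_openC; apply: cf; apply: open_closedC.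
- by move=> [z nOz fz]; apply: nOz; apply: sub.
- move=> y /= nI; apply: contrapT => nOy; apply: nI; by exists y.
Qed.

End helpers.

Section mainsec.
Context (R : realType) (X V : topologicalType) (f : X -> V)
  (hX : hausdorff_space X) (nX : normal_space X) (cf : continuous f)
  (clf : closed_map f) (lfc : locally_fiber_connected f).

Local Notation K x := (connected_component (fiber f x) x).

Lemma fiber_closed x : closed (fiber f x).
Proof.
have c1 : closed [set x] := @accessible_closed_set1 _ (hausdorff_accessible hX) x.
have c2 : closed [set f x] by rewrite -image_set1; apply: clf.
rewrite /fiber; apply: preimage_closed => // y _; exact: cf.
Qed.

Lemma lfc_loc y : exists U, nbhs y U /\
  forall z, U z -> f z = f y -> connected_component (fiber f y) y z.
Proof.
have := lfc (x:=y) (O:=setT); move=> /(_ openT I) [U [nU _ L]].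
exists U; split=> // z Uz fz.
have yU : U y by apply: nbhs_singleton.
rewrite (L y yU y z yU Uz erefl fz).
exact: connected_component_refl.
Qed.

Lemma K_closed x : closed (K x).
Proof.
move=> p cp.
have Fp : fiber f x p.
  apply: (@fiber_closed x); apply: (closureS _ cp).
  exact: connected_component_sub.
have [U [nU HU]] := lfc_loc p.
have [z [Kz Uz]] := cp U nU.
have fzx : f z = f x := connected_component_sub Kz.
have Fpx : f p = f x := Fp.
have := HU z Uz (etrans fzx (esym Fpx)).
rewrite (fiber_eq Fpx) => cpz.
exact: connected_component_trans Kz (connected_component_sym cpz).
Qed.

Lemma FK_closed x : closed (fiber f x `\` K x).
Proof.
move=> p cp.
have Fp : fiber f x p.
  apply: (@fiber_closed x); apply: (closureS _ cp).
  by move=> y [].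
have [U [nU HU]] := lfc_loc p.
have [z [[Fz nKz] Uz]] := cp U nU.
have Fpx : f p = f x := Fp.
have := HU z Uz (etrans Fz (esym Fpx)).
rewrite (fiber_eq Fpx) => cpz.
split => // Kp; apply: nKz.
exact: connected_component_trans Kp cpz.
Qed.

Lemma mainW x (P : set X) : open P -> K x `<=` P ->
  exists W, [/\ open W, W x, W `<=` P & satd f W].
Proof.
move=> oP KP.
have disj : K x `&` (fiber f x `\` K x) = set0.
  by rewrite -subset0 => y [a [_ b]].
have [U [W0 [oU oW0 KU FW0 UW0]]] :=
  (proj1 (@normal_openP R X)) nX _ _ (@K_closed x) (@FK_closed x) disj.
have sub : fiber f x `<=` (U `&` P) `|` W0.
  move=> y Fy; case: (pselect (K x y)) => h.
  - by left; split; [exact: KU | exact: KP].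
  - by right; apply: FW0; split.
have disj' : (U `&` P) `&` W0 = set0.
  rewrite -subset0 => y [[a _] b].
  by have : (U `&` W0) y by []; rewrite UW0.
have [N [oN Nfx sN]] := @fclosed_nbhs _ _ f _ x clf (openU (openI oU oP) oW0) sub.
exists (f @^-1` N `&` (U `&` P)); split.
- apply: openI; last exact: openI.
  by apply: open_comp => // y _; exact: cf.
- have Kxx : K x x by apply: connected_component_refl.
  by split => //; split; [exact: KU | exact: KP].
- by move=> y [_ [_ Py]].
- exact: sat_lemma2 (openI oU oP) oW0 disj' sN.
Qed.

End mainsec.

Lemma open_satd (X V : topologicalType) (f : X -> V) (W : set X) :
  open W -> satd f W -> open [set r : Xf f | W (repr r)].
Proof.
move=> oW sW.
change (open ((pi_f f) @^-1` [set r : Xf f | W (repr r)])).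
rewrite (_ : _ @^-1` _ = W) //; apply/seteqP; split => y /= h.
- by apply: (sW _ _ h); rewrite /pi_f reprK.
- by apply: (sW _ _ h); rewrite /pi_f reprK.
Qed.

Theorem lemma2p20 (R : realType) (X : topologicalType) (V : tvsType R)
    (f : X -> V) :
  connected_space X -> locally_connected_space X -> hausdorff_space X ->
  normal_space X -> first_countable_space X ->
  continuous f -> closed_map f ->
  local_convexity_data f -> locally_fiber_connected f ->
  closed_map (pi_f f) /\ hausdorff_space (Xf f).
Proof.
move=> _ _ hX nX _ cf clf _ lfc.
have mW := @mainW R X V f hX nX cf clf lfc.
have KC := @K_closed X V f hX cf clf lfc.
split.
- move=> C cC; rewrite -[pi_f f @` C]setCK closedC.
  change (open ((pi_f f) @^-1` (~` (pi_f f @` C)))).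
  rewrite openE => x nx.
  have KCx : connected_component (fiber f x) x `<=` ~` C.
    move=> y Ky Cy; apply: nx; exists y => //; apply/piP; split.
      exact: (connected_component_sub Ky).
    have fyx : f y = f x := connected_component_sub Ky.
    rewrite (fiber_eq fyx); exact: connected_component_sym.
  have [W [oW Wx WC sW]] := mW x _ (closed_openC cC) KCx.
  apply: (@filterS _ _ _ W); last exact: open_nbhs_nbhs.
  move=> y Wy [c Cc pc].
  exact: (WC c (sW _ _ Wy (esym pc)) Cc).
- rewrite open_hausdorff => p q pq.
  set a := repr p; set b := repr q.
  have pa : pi_f f a = p by rewrite /a /pi_f reprK.
  have qb : pi_f f b = q by rewrite /b /pi_f reprK.
  have disj : connected_component (fiber f a) a `&`
              connected_component (fiber f b) b = set0.
    rewrite -subset0 => z [Kaz Kbz].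
    have fza : f z = f a := connected_component_sub Kaz.
    have fzb : f z = f b := connected_component_sub Kbz.
    have fab : f a = f b by rewrite -fza.
    move: pq; rewrite -pa -qb => /eqP; apply; apply/piP; split => //.
    move: Kbz; rewrite -(fiber_eq fab) => Kbz.
    exact: connected_component_trans Kaz (connected_component_sym Kbz).
  have [Pa [Pb [oPa oPb KPa KPb PP]]] :=
    (proj1 (@normal_openP R X)) nX _ _ (KC a) (KC b) disj.
  have [Wa [oWa Waa WPa sWa]] := mW a _ oPa KPa.
  have [Wb [oWb Wbb WPb sWb]] := mW b _ oPb KPb.
  exists ([set r : Xf f | Wa (repr r)], [set r : Xf f | Wb (repr r)]).
  + by rewrite !inE.
  + split; [exact: open_satd | exact: open_satd |].
    apply/eqP; rewrite -subset0 => r [/= ha hb].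
    have : (Pa `&` Pb) (repr r) by split; [exact: WPa | exact: WPb].
    by rewrite PP.
Qed.
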